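(* Let $X,Y\in\{\mathsf{T},\mathsf{S}\}^*$ with $X\sqsubseteq Y$. Then: (idempotence) $X\mathsf{T}\mathsf{T}\equiv X\mathsf{T}$ and $X\mathsf{S}\mathsf{S}\equiv X\mathsf{S}$; (monotonicity) $X\mathsf{T}\sqsubseteq Y\mathsf{T}$; (inflation/deflation) $X\sqsubseteq X\mathsf{T}$ and $X\mathsf{S}\sqsubseteq X$; (maximality) $X\sqsubseteq \mathsf{T}$.
   Context: Fix attribute–taxonomy pairs $A_1{:}T_1,\dots,A_d{:}T_d$ with distinct attribute names, where each taxonomy $T_i=(V_i,\le_{V_i})$ is a poset. A t-tuple over a t-schema $S\subseteq\{A_1{:}T_1,\dots,A_d{:}T_d\}$ maps each $A_i$ in $S$ to a value of $V_i$; $\mathcal{D}$ is the set of all t-tuples over all such t-schemas. A preference relation is a binary relation $\succeq$ on $\mathcal{D}$; its strict part is $t_1\succ t_2$ iff $t_1\succeq t_2$ and not $t_2\succeq t_1$. Preferences are given by a formula $F(x,y)=\bigvee_i P_i(x,y)$, a disjunction of statements; each statement $P_i$ is a disjunction of clauses, each clause a satisfiable conjunction of atoms of the forms $x[A_i]\le_{V_i} v$, $x[A_i]\not\le_{V_i} v$, $y[A_i]\le_{V_i} v$, $y[A_i]\not\le_{V_i} v$; the formula induces $t_1\succeq t_2\iff F(t_1,t_2)$. Operator $\mathsf{T}$ maps a formula to one (obtained by adding statements built from composable clause pairs) inducing the transitive closure over $\mathcal{D}$ of the induced relation. Operator $\mathsf{S}$ (specificity-based refinement): repeat rounds; in a round,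 for each statement $P_i$ let $\mathrm{Impl}(P_i)$ be the set of statements $P_j$ such that $P_j(t_2,t_1)\Rightarrow P_i(t_1,t_2)$ for all $t_1,t_2\in\mathcal{D}$ but not conversely; simultaneously replace every $P_i$ with nonempty $\mathrm{Impl}(P_i)$ by $P_i(x,y)\wedge\bigwedge_{P_j\in \mathrm{Impl}(P_i)}\neg P_j(y,x)$; stop when no $\mathrm{Impl}$ set is nonempty. After each operator, contradictory clauses and subsumed statements are removed. For $X\in\{\mathsf{T},\mathsf{S}\}^*$, $\succeq_X$ is the relation induced by applying the operators of $X$ in order to the initial formula ($\varepsilon$ is the empty sequence). Containment $X\sqsubseteq Y$ means $\succeq_X\subseteq\succeq_Y$ for every initial preference formula; $X\equiv Y$ means $X\sqsubseteq Y$ and $Y\sqsubseteq X$. *)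

(* Defs.v *)
From Stdlib Require Import ClassicalEpsilon Relation_Operators.
From mathcomp Require Import all_boot.
Set Implicit Arguments.
Unset Strict Implicit.
Unset Printing Implicit Defensive.

Record taxonomy := Taxonomy {
  tcar : Type;
  tle : tcar -> tcar -> Prop;
  tle_refl : forall v, tle v v;
  tle_antisym : forall u v, tle u v -> tle v u -> u = v;
  tle_trans : forall u v w, tle u v -> tle v w -> tle u w
}.

Definition pb (P : Prop) : bool :=
  if excluded_middle_informative P then true else false.

Section Preferences.
(* attributes A_1..A_d are the indices i : 'I_d, attribute A_i has taxonomy Tx i *)
Variables (d : nat) (Tx : 'I_d -> taxonomy).

(* A t-tuple: a partial assignment; its t-schema is the set of i with t i <> None.
   The type ttuple is the set D of all t-tuples over all t-schemas. *)
Definition ttuple := forall i : 'I_d, option (tcar (Tx i)).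

(* Atom:  (x or y)[A_i] <= v   (a_pos = true)   or   (x or y)[A_i] </= v  (a_pos = false).
   a_onx = true means the atom is about x, false means about y. *)
Record atom := Atom {
  a_onx : bool;
  a_attr : 'I_d;
  a_pos : bool;
  a_val : tcar (Tx a_attr)
}.

(* t[A_i] <= v holds iff A_i is in the schema of t and t[A_i] <=_{V_i} v;
   t[A_i] </= v is its negation. *)
Definition atom_holds (a : atom) (t1 t2 : ttuple) : Prop :=
  let t := if a_onx a then t1 else t2 in
  let le_holds :=
    match t (a_attr a) with
    | Some v => tle v (a_val a)
    | None => False
    end in
  if a_pos a then le_holds else ~ le_holds.

Definition clause := seq atom.
Definition statement := seq clause.
Definition formula := seq statement.

Definition clause_holds (c : clause) (t1 t2 : ttuple) : Prop :=
  foldr (fun a P => atom_holds a t1 t2 /\ P) True c.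

Definition stmt_holds (P : statement) (t1 t2 : ttuple) : Prop :=
  exists c, List.In c P /\ clause_holds c t1 t2.

Definition induced (F : formula) (t1 t2 : ttuple) : Prop :=
  exists P, List.In P F /\ stmt_holds P t1 t2.

Definition clause_sat (c : clause) : Prop :=
  exists t1 t2, clause_holds c t1 t2.

Definition wf_formula (F : formula) : Prop :=
  forall P c, List.In P F -> List.In c P -> clause_sat c.

(* flip a (x,y) is equivalent to ~ a (y,x) *)
Definition flip (a : atom) : atom :=
  @Atom (~~ a_onx a) (a_attr a) (~~ a_pos a) (a_val a).

(* ~ c(y,x) as a statement (DNF) *)
Definition negclause (c : clause) : statement := [seq [:: flip a] | a <- c].

Definition conjS (P Q : statement) : statement :=
  [seq c1 ++ c2 | c1 <- P, c2 <- Q].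

(* ~ P(y,x) as a statement (DNF) *)
Definition negstmt (P : statement) : statement :=
  foldr (fun c acc => conjS (negclause c) acc) [:: [::]] P.

Definition in_impl (Pj Pi : statement) : Prop :=
  (forall t1 t2, stmt_holds Pj t2 t1 -> stmt_holds Pi t1 t2) /\
  ~ (forall t1 t2, stmt_holds Pi t1 t2 -> stmt_holds Pj t2 t1).

Definition impl_set (F : formula) (Pi : statement) : seq statement :=
  [seq Pj <- F | pb (in_impl Pj Pi)].

Definition refine (F : formula) (Pi : statement) : statement :=
  foldr (fun Pj acc => conjS acc (negstmt Pj)) Pi (impl_set F Pi).

(* one round: simultaneous replacement *)
Definition S_round (F : formula) : formula := [seq refine F Pi | Pi <- F].

Definition no_impl (F : formula) : Prop :=
  forall Pi Pj, List.In Pi F -> List.In Pj F -> ~ in_impl Pj Pi.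

Inductive S_iter : formula -> formula -> Prop :=
| S_done F : no_impl F -> S_iter F F
| S_more F G : ~ no_impl F -> S_iter (S_round F) G -> S_iter F G.

Definition remove_contradictory (F : formula) : formula :=
  [seq [seq c <- P | pb (clause_sat c)] | P <- F].

Definition stmt_impl (P Q : statement) : Prop :=
  forall t1 t2, stmt_holds P t1 t2 -> stmt_holds Q t1 t2.

(* statement k is subsumed if it implies another statement l, strictly, or
   equivalently and l occurs earlier (so one copy of equivalent statements is kept) *)
Definition subsumed (F : formula) (k : nat) : Prop :=
  exists l, l < size F /\ l <> k /\
    stmt_impl (nth [::] F k) (nth [::] F l) /\
    (~ stmt_impl (nth [::] F l) (nth [::] F k) \/ l < k).

Definition remove_subsumed (F : formula) : formula :=
  [seq nth [::] F k | k <- iota 0 (size F) & ~~ pb (subsumed F k)].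

Definition cleanup (F : formula) : formula := remove_subsumed (remove_contradictory F).

(* T adds statements (built from satisfiable composed clauses) so that the
   resulting formula induces the transitive closure over D of the induced relation. *)
Definition T_spec (Top : formula -> formula) : Prop :=
  forall F, wf_formula F ->
    wf_formula (Top F) /\ (exists G, Top F = F ++ G) /\
    (forall t1 t2, induced (Top F) t1 t2 <-> clos_trans ttuple (induced F) t1 t2).

Inductive op := OpT | OpS.

Section Eval.
Variable Top : formula -> formula.

Inductive op_step : op -> formula -> formula -> Prop :=
| stepT F : op_step OpT F (cleanup (Top F))
| stepS F G : S_iter F G -> op_step OpS F (cleanup G).

Inductive eval : seq op -> formula -> formula -> Prop :=
| eval_nil F : eval [::] F F
| eval_cons o X F G H : op_step o F G -> eval X G H -> eval (o :: X) F H.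

Definition contained (X Y : seq op) : Prop :=
  forall F, wf_formula F -> forall G H, eval X F G -> eval Y F H ->
    forall t1 t2, induced G t1 t2 -> induced H t1 t2.

Definition op_equiv (X Y : seq op) : Prop := contained X Y /\ contained Y X.
End Eval.
End Preferences.

(* Main.v *)
From Stdlib Require Import ClassicalEpsilon Relation_Operators.
Require Import Defs.
From mathcomp Require Import all_boot.
From mathcomp Require Import zify.

Lemma pbT (P : Prop) : pb P = true <-> P.
Proof. rewrite /pb; case: excluded_middle_informative => p; split => //. Qed.

Lemma pb_eq (P Q : Prop) : (P <-> Q) -> pb P = pb Q.
Proof.
rewrite /pb => h; case: excluded_middle_informative => p;
case: excluded_middle_informative => q //; exfalso; tauto.
Qed.

Lemma InE (T : eqType) (x : T) (s : seq T) : List.In x s <-> x \in s.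
Proof.
elim: s => [|a s IH] /=; first by split.
rewrite in_cons; split.
- case=> [->|/IH ->]; [by rewrite eqxx | by rewrite orbT].
- case/orP=> [/eqP ->|/IH]; by [left|right].
Qed.

Lemma In_cat {A} (x : A) s t : List.In x (s ++ t) <-> List.In x s \/ List.In x t.
Proof. elim: s => [|a s IH] /=; [tauto| rewrite IH; tauto]. Qed.

Lemma In_map {A B} (f : A -> B) s y :
  List.In y (map f s) <-> exists x, List.In x s /\ y = f x.
Proof.
elim: s y => [|a s IH] y /=; first by split => // -[x []].
split.
- case=> [<-|h]; first by exists a; split; [left|].
  have [x [hx ->]] := proj1 (IH _) h. by exists x; split; [right|].
- case=> x [[<-|h] ->]; first by left.
  right; apply: (proj2 (IH _)); by exists x.
Qed.

Lemma In_filter {A} (p : pred A) s x : List.In x (filter p s) <-> List.In x s /\ p x.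
Proof.
elim: s => [|a s IH] /=; first by split => // -[].
case pa: (p a) => /=; rewrite IH; split.
- by case=> [<-|[]]; tauto.
- by case=> [[<-|]]; tauto.
- by case; tauto.
- case=> [[<-|]]; [by rewrite pa|tauto].
Qed.

Lemma In_nth {A} (d : A) s k : k < size s -> List.In (nth d s k) s.
Proof.
elim: s k => [|a s IH] [|k] //= h; first by left.
right; exact: IH.
Qed.

Lemma nth_of_In {A} (d : A) s x : List.In x s -> exists k, k < size s /\ x = nth d s k.
Proof.
elim: s => [|a s IH] //= [<-|/IH [k [h ->]]]; first by exists 0.
by exists k.+1.
Qed.

Lemma In_allpairs {A B C} (f : A -> B -> C) P Q c :
  List.In c [seq f c1 c2 | c1 <- P, c2 <- Q] ->
  exists c1 c2, List.In c1 P /\ List.In c2 Q /\ c = f c1 c2.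
Proof.
elim: P => [|a P IH] //= /In_cat [/In_map [c2 [h ->]]|/IH [c1 [c2 [h1 [h2 ->]]]]].
- by exists a, c2; split; [left|].
- by exists c1, c2; split; [right|].
Qed.

Lemma count_split {A} (a b : pred A) s : (forall x, a x -> b x) ->
  count b s = count a s + count (predD b a) s.
Proof.
move=> hab; elim: s => [|x s IH] //=; rewrite IH.
case ax: (a x); case bx: (b x) => //=; try lia.
by rewrite (hab _ ax) in bx.
Qed.

Section Proof.
Variables (d : nat) (Tx : 'I_d -> taxonomy).
Variable Top : formula Tx -> formula Tx.
Hypothesis hTop : T_spec Top.

Notation tt := (ttuple Tx).

Lemma clause_cat (c1 c2 : clause Tx) t1 t2 :
  clause_holds (c1 ++ c2) t1 t2 -> clause_holds c1 t1 t2.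
Proof. elim: c1 => [|a c IH] //= [h1 h2]; split => //; exact: IH. Qed.

Lemma conjS_holds (P Q : statement Tx) t1 t2 :
  stmt_holds (conjS P Q) t1 t2 -> stmt_holds P t1 t2.
Proof.
case=> c [hin hc]; rewrite /conjS in hin.
have [c1 [c2 [h1 [h2 e]]]] := @In_allpairs _ _ _ (fun c1 c2 => c1 ++ c2) _ _ _ hin; subst c.
exists c1; split => //; exact: clause_cat hc.
Qed.

Lemma refine_holds (F : formula Tx) Pi t1 t2 :
  stmt_holds (refine F Pi) t1 t2 -> stmt_holds Pi t1 t2.
Proof.
rewrite /refine; elim: (impl_set F Pi) => [|Pj s IH] //= h.
apply: IH; exact: conjS_holds h.
Qed.

Lemma S_round_sub (F : formula Tx) t1 t2 :
  induced (S_round F) t1 t2 -> induced F t1 t2.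
Proof.
case=> P [/In_map [Q [hQ ->]] h]; exists Q; split => //; exact: refine_holds h.
Qed.

Lemma S_iter_sub (F G : formula Tx) t1 t2 :
  S_iter F G -> induced G t1 t2 -> induced F t1 t2.
Proof. move=> hS; elim: hS => // F0 G0 _ _ IH h; apply: S_round_sub; exact: IH. Qed.

Lemma S_iter_det (F G1 G2 : formula Tx) : S_iter F G1 -> S_iter F G2 -> G1 = G2.
Proof.
move=> h; elim: h G2 => [F0 n|F0 G0 n _ IH] G2 h2; inversion h2; subst => //.
exact: IH.
Qed.

Lemma RC_stmt (P : statement Tx) t1 t2 :
  stmt_holds [seq c <- P | pb (clause_sat c)] t1 t2 <-> stmt_holds P t1 t2.
Proof.
split; case=> c [hc h].
- by exists c; move/In_filter: hc => [].
- exists c; split => //; apply/In_filter; split => //; apply/pbT.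
  by exists t1, t2.
Qed.

Definition cnt (F : formula Tx) k :=
  count (fun j => pb (stmt_impl (nth [::] F k) (nth [::] F j))) (iota 0 (size F)).

Lemma stmt_impl_trans (P Q R : statement Tx) :
  stmt_impl P Q -> stmt_impl Q R -> stmt_impl P R.
Proof. move=> h1 h2 t1 t2 h; exact/h2/h1. Qed.

Lemma cnt_le (F : formula Tx) k l : stmt_impl (nth [::] F k) (nth [::] F l) ->
  cnt F l <= cnt F k.
Proof.
move=> hkl; rewrite /cnt (@count_split _ (fun j => pb (stmt_impl (nth [::] F l) (nth [::] F j)))
  (fun j => pb (stmt_impl (nth [::] F k) (nth [::] F j)))); first lia.
move=> x /pbT h; apply/pbT; exact: stmt_impl_trans hkl h.
Qed.

Lemma cnt_lt (F : formula Tx) k l : k < size F ->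
  stmt_impl (nth [::] F k) (nth [::] F l) ->
  ~ stmt_impl (nth [::] F l) (nth [::] F k) ->
  cnt F l < cnt F k.
Proof.
move=> hk hkl hlk; rewrite /cnt (@count_split _ (fun j => pb (stmt_impl (nth [::] F l) (nth [::] F j)))
  (fun j => pb (stmt_impl (nth [::] F k) (nth [::] F j)))).
- suff: 0 < count (predD (fun j => pb (stmt_impl (nth [::] F k) (nth [::] F j)))
         (fun j => pb (stmt_impl (nth [::] F l) (nth [::] F j)))) (iota 0 (size F)) by lia.
  rewrite -has_count; apply/hasP; exists k; first by rewrite mem_iota.
  rewrite /= /predD /=; apply/andP; split.
  + apply/negP => /pbT //.
  + by apply/pbT => t1 t2.
- move=> x /pbT h; apply/pbT; exact: stmt_impl_trans hkl h.
Qed.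

Lemma best (F : formula Tx) k : k < size F ->
  exists l, l < size F /\ ~ subsumed F l /\ stmt_impl (nth [::] F k) (nth [::] F l).
Proof.
move: {2}(cnt F k * size F + k) (leqnn (cnt F k * size F + k)) => m.
elim: m k => [|m IH] k hm hk.
- case: (excluded_middle_informative (subsumed F k)) => hs.
  + have: 0 < size F by lia.
    case: hs => l [hl [hlk [hi hor]]].
    case: (excluded_middle_informative (stmt_impl (nth [::] F l) (nth [::] F k))) => hlk'.
    * case: hor => [hn|hlt]; first by [].
      lia.
    * have := cnt_lt F k l hk hi hlk'; nia.
  + by exists k; split => //; split => // t1 t2.
- case: (excluded_middle_informative (subsumed F k)) => hs; last first.
    by exists k; split => //; split => // t1 t2.
  case: hs => l [hl [hlk [hi hor]]].
  have [l' [hl' [hns hi']]] : exists l', l' < size F /\ ~ subsumed F l' /\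
      stmt_impl (nth [::] F l) (nth [::] F l').
    apply: IH => //.
    case: (excluded_middle_informative (stmt_impl (nth [::] F l) (nth [::] F k))) => hlk'.
    * case: hor => [hn|hlt]; first by [].
      have hc : cnt F l = cnt F k.
        by apply/eqP; rewrite eqn_leq !(cnt_le F _ _).
      lia.
    * have := cnt_lt F k l hk hi hlk'; nia.
  exists l'; split => //; split => //; exact: stmt_impl_trans hi hi'.
Qed.


Lemma RC_In (F : formula Tx) P : List.In P (remove_contradictory F) ->
  exists Q, List.In Q F /\ P = [seq c <- Q | pb (clause_sat c)].
Proof. by move/In_map. Qed.

Lemma RC_In' (F : formula Tx) Q : List.In Q F ->
  List.In [seq c <- Q | pb (clause_sat c)] (remove_contradictory F).
Proof. move=> h; apply/In_map; by exists Q. Qed.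

Lemma RS_In (G : formula Tx) P : List.In P (remove_subsumed G) -> List.In P G.
Proof.
case/In_map=> k [/In_filter [/InE hk _] ->]; apply: In_nth.
by move: hk; rewrite mem_iota.
Qed.

Lemma RS_cover (G : formula Tx) P : List.In P G ->
  exists Q, List.In Q (remove_subsumed G) /\ stmt_impl P Q.
Proof.
case/(nth_of_In [::])=> k [hk ->].
have [l [hl [hns hi]]] := best G k hk.
exists (nth [::] G l); split => //.
apply/In_map; exists l; split => //; apply/In_filter; split.
- by apply/InE; rewrite mem_iota.
- apply/negP => /pbT //.
Qed.

Lemma cleanup_induced (F : formula Tx) t1 t2 :
  induced (cleanup F) t1 t2 <-> induced F t1 t2.
Proof.
rewrite /cleanup; split.
- case=> P [/RS_In /RC_In [Q [hQ ->]] /RC_stmt h]; by exists Q.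
- case=> Q [hQ h].
  have [P [hP hi]] := RS_cover _ _ (RC_In' _ _ hQ).
  exists P; split => //; apply: hi; exact/RC_stmt.
Qed.

Lemma cleanup_wf (F : formula Tx) : wf_formula (cleanup F).
Proof.
move=> P c /RS_In /RC_In [Q [_ ->]] /In_filter [_ /pbT] //.
Qed.

Lemma cleanup_equiv (F : formula Tx) P : List.In P (cleanup F) ->
  exists Q, List.In Q F /\ forall t1 t2, stmt_holds P t1 t2 <-> stmt_holds Q t1 t2.
Proof.
move=> /RS_In /RC_In [Q [hQ ->]]; exists Q; split => // t1 t2; exact: RC_stmt.
Qed.

Lemma no_impl_cleanup (G : formula Tx) : no_impl G -> no_impl (cleanup G).
Proof.
move=> hn Pi Pj /cleanup_equiv [Qi [hQi ei]] /cleanup_equiv [Qj [hQj ej]] [h1 h2].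
apply: (hn Qi Qj hQi hQj); split.
- move=> t1 t2 /ej /h1 /ei //.
- move=> h; apply: h2 => t1 t2 /ei /h /ej //.
Qed.

Lemma S_iter_no_impl (F G : formula Tx) : S_iter F G -> no_impl G.
Proof. by move=> h; elim: h. Qed.

Lemma op_step_det o (F G1 G2 : formula Tx) :
  op_step Top o F G1 -> op_step Top o F G2 -> G1 = G2.
Proof.
move=> h1 h2; inversion h1; inversion h2; subst => //.
by rewrite (S_iter_det _ _ _ H H3).
Qed.

Lemma eval_det X (F G1 G2 : formula Tx) :
  eval Top X F G1 -> eval Top X F G2 -> G1 = G2.
Proof.
move=> h; elim: h G2 => [F0|o X0 F0 G0 H0 hs _ IH] G2 h2; inversion h2; subst => //.
apply: IH; by rewrite (op_step_det _ _ _ _ hs H3).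
Qed.

Lemma op_step_wf o (F G : formula Tx) : op_step Top o F G -> wf_formula G.
Proof. by case=> *; apply: cleanup_wf. Qed.

Lemma eval_wf X (F G : formula Tx) : wf_formula F -> eval Top X F G -> wf_formula G.
Proof.
move=> hF h; elim: h hF => // o X0 F0 G0 H0 hs _ IH _; apply: IH; exact: op_step_wf hs.
Qed.

Lemma eval_app X Y (F H : formula Tx) : eval Top (X ++ Y) F H ->
  exists G, eval Top X F G /\ eval Top Y G H.
Proof.
elim: X F => [|o X IH] F /=.
- move=> h; exists F; split => //; constructor.
- move=> h; inversion h; subst.
  have [G1 [h1 h2]] := IH _ H6.
  exists G1; split => //; econstructor; eauto.
Qed.

Lemma stepT_ind (F G : formula Tx) t1 t2 : wf_formula F -> op_step Top OpT F G ->
  induced G t1 t2 <-> clos_trans _ (induced F) t1 t2.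
Proof.
move=> hF h; inversion h; subst.
rewrite cleanup_induced; have [_ [_ e]] := hTop F hF; exact: e.
Qed.

Lemma stepS_sub (F G : formula Tx) t1 t2 : op_step Top OpS F G ->
  induced G t1 t2 -> induced F t1 t2.
Proof.
move=> h; inversion h; subst => /cleanup_induced; exact: S_iter_sub.
Qed.

Lemma TC_mono (R1 R2 : tt -> tt -> Prop) x y :
  (forall a b, R1 a b -> R2 a b) -> clos_trans _ R1 x y -> clos_trans _ R2 x y.
Proof.
move=> hR h; elim: h => [a b /hR|a b c _ h1 _ h2]; [exact: t_step| exact: t_trans h1 h2].
Qed.

Lemma TC_idem (P R : tt -> tt -> Prop) x y :
  (forall a b, P a b <-> clos_trans _ R a b) -> clos_trans _ P x y -> P x y.
Proof.
move=> e h; elim: h => // a b c _ h1 _ h2.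
apply/e; apply: t_trans (proj1 (e _ _) h1) (proj1 (e _ _) h2).
Qed.

Lemma eval_le_TC X (F G : formula Tx) t1 t2 : wf_formula F -> eval Top X F G ->
  induced G t1 t2 -> clos_trans _ (induced F) t1 t2.
Proof.
move=> hF h; elim: h hF t1 t2 => [F0 _ t1 t2 h|o X0 F0 G0 H0 hs he IH hF t1 t2 hi].
- exact: t_step h.
- have hG0 := op_step_wf _ _ _ hs.
  have := IH hG0 t1 t2 hi.
  have sub : forall a b, induced G0 a b -> clos_trans _ (induced F0) a b.
    move=> a b hab; case: o hs => hs.
    + exact: (proj1 (stepT_ind _ _ a b hF hs) hab).
    + apply: t_step; exact: (stepS_sub _ _ a b hs hab).
  move/(TC_mono _ _ _ _ sub); apply: (TC_idem (clos_trans _ (induced F0)) (induced F0)) => a b; tauto.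
Qed.


Lemma dec1 X o (F H : formula Tx) : eval Top (X ++ [:: o]) F H ->
  exists G, eval Top X F G /\ op_step Top o G H.
Proof.
move/eval_app=> [G [h1 h2]]; exists G; split => //.
inversion h2; subst. match goal with hh : eval _ [::] _ _ |- _ => inversion hh; subst end => //.
Qed.

Lemma dec2 X o1 o2 (F H : formula Tx) : eval Top (X ++ [:: o1; o2]) F H ->
  exists G G1, eval Top X F G /\ op_step Top o1 G G1 /\ op_step Top o2 G1 H.
Proof.
move/eval_app=> [G [h1 h2]]; exists G.
inversion h2; subst.
match goal with hh : eval _ [:: _] _ _ |- _ => inversion hh; subst end.
match goal with hh : eval _ [::] _ _ |- _ => inversion hh; subst end.
by eexists; split; [|split]; eauto.
Qed.

Lemma main_sec X Y (hXY : contained Top X Y) :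
  op_equiv Top (X ++ [:: OpT; OpT]) (X ++ [:: OpT]) /\
  op_equiv Top (X ++ [:: OpS; OpS]) (X ++ [:: OpS]) /\
  contained Top (X ++ [:: OpT]) (Y ++ [:: OpT]) /\
  contained Top X (X ++ [:: OpT]) /\
  contained Top (X ++ [:: OpS]) X /\
  contained Top X [:: OpT].
Proof.
have TT : forall F G1 G2 t1 t2, wf_formula F -> op_step Top OpT F G1 ->
    op_step Top OpT G1 G2 -> induced G2 t1 t2 <-> induced G1 t1 t2.
  move=> F G1 G2 t1 t2 hF h1 h2.
  rewrite (stepT_ind _ _ _ _ (op_step_wf _ _ _ h1) h2).
  split; last exact: t_step.
  apply: (TC_idem _ (induced F)) => a b; exact: stepT_ind.
have SS : forall F G1 G2 t1 t2, op_step Top OpS F G1 ->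
    op_step Top OpS G1 G2 -> induced G2 t1 t2 <-> induced G1 t1 t2.
  move=> F G1 G2 t1 t2 h1 h2; inversion h1; subst; inversion h2; subst.
  have hn := no_impl_cleanup _ (S_iter_no_impl _ _ H).
  rewrite -(S_iter_det _ _ _ (S_done hn) H0); exact: cleanup_induced.
split.
  split => F hF H H' hH hH' t1 t2 hi.
  - have [G [G1 [he [s1 s2]]]] := dec2 _ _ _ _ _ hH.
    have [G' [he' s']] := dec1 _ _ _ _ hH'.
    rewrite (eval_det _ _ _ _ he' he) in s'; rewrite (op_step_det _ _ _ _ s' s1).
    exact/(TT _ _ _ _ _ (eval_wf _ _ _ hF he) s1 s2).
  - have [G [G1 [he [s1 s2]]]] := dec2 _ _ _ _ _ hH'.
    have [G' [he' s']] := dec1 _ _ _ _ hH.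
    rewrite (eval_det _ _ _ _ he' he) in s'; rewrite (op_step_det _ _ _ _ s' s1) in hi.
    exact/(TT _ _ _ _ _ (eval_wf _ _ _ hF he) s1 s2).
split.
  split => F hF H H' hH hH' t1 t2 hi.
  - have [G [G1 [he [s1 s2]]]] := dec2 _ _ _ _ _ hH.
    have [G' [he' s']] := dec1 _ _ _ _ hH'.
    rewrite (eval_det _ _ _ _ he' he) in s'; rewrite (op_step_det _ _ _ _ s' s1).
    exact/(SS _ _ _ _ _ s1 s2).
  - have [G [G1 [he [s1 s2]]]] := dec2 _ _ _ _ _ hH'.
    have [G' [he' s']] := dec1 _ _ _ _ hH.
    rewrite (eval_det _ _ _ _ he' he) in s'; rewrite (op_step_det _ _ _ _ s' s1) in hi.
    exact/(SS _ _ _ _ _ s1 s2).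
split.
  move=> F hF H H' hH hH' t1 t2 hi.
  have [G [he s]] := dec1 _ _ _ _ hH.
  have [G' [he' s']] := dec1 _ _ _ _ hH'.
  apply/(stepT_ind _ _ _ _ (eval_wf _ _ _ hF he') s').
  have := proj1 (stepT_ind _ _ _ _ (eval_wf _ _ _ hF he) s) hi.
  apply: TC_mono => a b; exact: (hXY F hF _ _ he he' a b).
split.
  move=> F hF G H' he hH' t1 t2 hi.
  have [G' [he' s']] := dec1 _ _ _ _ hH'.
  rewrite (eval_det _ _ _ _ he' he) in s'.
  apply/(stepT_ind _ _ _ _ (eval_wf _ _ _ hF he) s'); exact: t_step.
split.
  move=> F hF H G hH he t1 t2 hi.
  have [G' [he' s']] := dec1 _ _ _ _ hH.
  rewrite (eval_det _ _ _ _ he' he) in s'.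
  exact: stepS_sub s' hi.
move=> F hF G H he hH t1 t2 hi.
have [F' [he' s']] := dec1 [::] _ _ _ hH.
inversion he'; subst.
apply/(stepT_ind _ _ _ _ hF s').
exact: eval_le_TC hF he hi.
Qed.

End Proof.

Theorem mainTheorem2 (d : nat) (Tx : 'I_d -> taxonomy)
  (Top : formula Tx -> formula Tx) (hTop : T_spec Top)
  (X Y : seq op) (hXY : contained Top X Y) :
  (* idempotence *)
  op_equiv Top (X ++ [:: OpT; OpT]) (X ++ [:: OpT]) /\
  op_equiv Top (X ++ [:: OpS; OpS]) (X ++ [:: OpS]) /\
  (* monotonicity *)
  contained Top (X ++ [:: OpT]) (Y ++ [:: OpT]) /\
  (* inflation / deflation *)
  contained Top X (X ++ [:: OpT]) /\
  contained Top (X ++ [:: OpS]) X /\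
  (* maximality *)
  contained Top X [:: OpT].
Proof. exact: (main_sec d Tx Top hTop X Y hXY). Qed.
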